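(* Let $(V,E,d)$ be a multi-weighted game graph and $v\in V$. If the value of the mean-payoff game $\mathrm{MP}(V,E^{(1)})$ at $v$ is non-negative, then every positional optimal strategy of Player 1 (Max) in $\mathrm{MP}(V,E^{(1)})$ is winning for Player 1 from $v$ in the lexicographic energy game $\mathrm{LexEn}(V,E,d)$. If the value at $v$ is negative, then every positional optimal strategy of Player 2 (Min) in $\mathrm{MP}(V,E^{(1)})$ is winning for Player 2 from $v$ in $\mathrm{LexEn}(V,E,d)$.
   Context: A multi-weighted game graph is a tuple $(V,E,d)$ where $d\ge1$, $V=V_1\uplus V_2$ is a finite vertex set (Player 1 and Player 2 vertices), and $E\subseteq V\times\mathbb Z^d\times V$ is a finite set of edges $v\xrightarrow{\vec w}v'$, every vertex having an outgoing edge; players strictly alternate, edge weights are determined by endpoints, and not all weights are zero. Plays are infinite paths $v_0\xrightarrow{\vec w_1}v_1\cdots$; strategies map finite paths ending in a player's vertex to an outgoing edge; positional strategies depend only on the last vertex; a strategy is winning from $v$ if all plays from $v$ consistent with it are won. In $\mathrm{LexEn}(V,E,d)$, a play is won by Player 2 if there exists $1\le k\le d$ with $\limsup_n\sum_{j\le n}\vec w_j(k)=-\infty$ and $\liminf_n\sum_{j\le n}\vec w_j(\ell)<+\infty$ for all $\ell<k$; otherwise by Player 1. The weighted edge set $E^{(1)}$: define $E^{(d)}$ giving edge $v\xrightarrow{\vec w}v'$ weight $r_d=\vec w(d)$, and for $i=d-1,\dots,1$, $E^{(i)}$ giving it weight $r_i=\vec w(i)(|V|\cdot\|E^{(i+1)}\|+1)+r_{i+1}$,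 with $\|E^{(i+1)}\|$ the maximal absolute weight in $E^{(i+1)}$. The mean-payoff game $\mathrm{MP}(V,E^{(1)})$ is played on the same vertices with these integer weights; on a play with weights $u_1,u_2,\dots$, Max (Player 1) gains $\liminf_n(u_1+\dots+u_n)/n$ and Min (Player 2) loses $\limsup_n(u_1+\dots+u_n)/n$. Optimal strategies are those guaranteeing at least as good a payoff as any other strategy; positional optimal strategies exist for both players and yield a common value at each initial vertex. *)

(* Defs.v *)
From HB Require Import structures.
From mathcomp Require Import all_boot all_order all_algebra.
Set Implicit Arguments. Unset Strict Implicit. Unset Printing Implicit Defensive.
Import Order.TTheory GRing.Theory Num.Theory.
Local Open Scope ring_scope.

Section Game.
Variable V : finType.
(* owner x = true : x is a Player 1 (Max) vertex; false : Player 2 (Min) *)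
Variable owner : V -> bool.
Variable e : rel V.

(* A strategy: given the history of vertices before the current one and the
   current vertex, choose the next vertex. *)
Definition strategy := seq V -> V -> V.

Definition valid_strategy (pl : bool) (s : strategy) : Prop :=
  forall h x, owner x = pl -> e x (s h x).

Definition positional (s : strategy) : Prop :=
  exists f : V -> V, forall h x, s h x = f x.

Definition is_play (p : nat -> V) : Prop := forall n, e (p n) (p n.+1).

Definition hist (p : nat -> V) (n : nat) : seq V := [seq p i | i <- iota 0 n].

Definition consistent (pl : bool) (s : strategy) (u : V) (p : nat -> V) : Prop :=
  [/\ p 0%N = u, is_play p &
      forall n, owner (p n) = pl -> p n.+1 = s (hist p n) (p n)].

Definition psum (r : V -> V -> int) (p : nat -> V) (n : nat) : int :=
  \sum_(j < n) r (p j) (p j.+1).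

Definition avg (r : V -> V -> int) (p : nat -> V) (n : nat) : rat :=
  (psum r p n.+1)%:~R / (n.+1)%:R.

Definition liminf_ge (r : V -> V -> int) (p : nat -> V) (c : rat) : Prop :=
  forall eps : rat, 0 < eps ->
    exists N, forall n, (N <= n)%N -> c - eps <= avg r p n.

Definition limsup_le (r : V -> V -> int) (p : nat -> V) (c : rat) : Prop :=
  forall eps : rat, 0 < eps ->
    exists N, forall n, (N <= n)%N -> avg r p n <= c + eps.

Definition guar_max r (s : strategy) (u : V) (c : rat) : Prop :=
  forall p, consistent true s u p -> liminf_ge r p c.

Definition guar_min r (s : strategy) (u : V) (c : rat) : Prop :=
  forall p, consistent false s u p -> limsup_le r p c.

Definition optimal_max r (s : strategy) : Prop :=
  forall s', valid_strategy true s' ->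
    forall u c, guar_max r s' u c -> guar_max r s u c.

Definition optimal_min r (s : strategy) : Prop :=
  forall s', valid_strategy false s' ->
    forall u c, guar_min r s' u c -> guar_min r s u c.

Definition mp_value_ge0 r (v : V) : Prop :=
  forall eps : rat, 0 < eps ->
    exists s, valid_strategy true s /\ guar_max r s v (- eps).

Definition mp_value_lt0 r (v : V) : Prop :=
  exists c : rat, c < 0 /\ exists s, valid_strategy false s /\ guar_min r s v c.

Variable d : nat.
Variable w : V -> V -> 'I_d -> int.

(* 0-indexed coordinate k of the weight, 0 outside range *)
Definition coord (k : nat) (u u' : V) : int :=
  match (insub k : option 'I_d) with Some i => w u u' i | None => 0 end.

Definition normE (r : V -> V -> int) : nat :=
  \max_(q : V * V | e q.1 q.2) `|r q.1 q.2|%N.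

(* Ew m is the weight function of E^(d-m) (paper's 1-indexed notation) *)
Fixpoint Ew (m : nat) : V -> V -> int :=
  match m with
  | 0 => coord d.-1
  | m'.+1 => fun u u' =>
      coord (d.-1 - m)%N u u' * ((#|V| * normE (Ew m'))%N%:Z + 1) + Ew m' u u'
  end.

Definition E1 : V -> V -> int := Ew d.-1.

Definition lex_p2_wins (p : nat -> V) : Prop :=
  exists k : 'I_d,
    (forall M : int, exists N, forall n, (N <= n)%N ->
        psum (fun u u' => w u u' k) p n <= M) /\
    (forall l : 'I_d, (l < k)%N ->
        exists B : int, forall N, exists2 n, (N <= n)%N &
          psum (fun u u' => w u u' l) p n <= B).

End Game.

(* Main.v *)
Require Import Defs.
From HB Require Import structures.
From mathcomp Require Import all_boot all_order all_algebra.
From mathcomp Require Import zify ring lra.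
From Stdlib Require Import Classical.
Import Order.TTheory GRing.Theory Num.Theory.
Local Open Scope ring_scope.
Set Implicit Arguments. Unset Strict Implicit.

Definition walkP {V : Type} (F : V -> V -> Prop) (q : nat -> V) (n : nat) :=
  forall t, (t < n)%N -> F (q t) (q t.+1).

Definition wsum {V : Type} (a : V -> V -> int) (q : nat -> V) (n : nat) : int :=
  \sum_(t < n) a (q t) (q t.+1).

Lemma wsum_split (V : Type) (a : V -> V -> int) q m k :
  wsum a q (m + k) = wsum a q m + wsum a (fun t => q (m + t)%N) k.
Proof.
rewrite /wsum big_split_ord /=; congr (_ + _); apply: eq_bigr => i _ //=.
by rewrite addnS.
Qed.

Lemma wsum_ext (V : Type) (a : V -> V -> int) q q' n :
  (forall t, (t <= n)%N -> q t = q' t) -> wsum a q n = wsum a q' n.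
Proof.
move=> H; apply: eq_bigr => i _; rewrite !H //; last exact: ltnW.
Qed.

Lemma wsumS (V : Type) (a : V -> V -> int) q n :
  wsum a q n.+1 = wsum a q n + a (q n) (q n.+1).
Proof. by rewrite /wsum big_ord_recr. Qed.

Lemma wsum0 (V : Type) (a : V -> V -> int) q : wsum a q 0 = 0.
Proof. by rewrite /wsum big_ord0. Qed.

Lemma wsum_lb (V : Type) (a : V -> V -> int) q n (M : int) :
  (forall t, (t < n)%N -> - M <= a (q t) (q t.+1)) -> - (n%:Z * M) <= wsum a q n.
Proof.
elim: n => [|n IH] H; first by rewrite wsum0 mul0r oppr0.
rewrite wsumS.
have h1 := H n (ltnSn n).
have h2 : - (n%:Z * M) <= wsum a q n by apply: IH => t lt; apply: H; apply: ltnW.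
have -> : (n.+1)%:Z * M = n%:Z * M + M by rewrite intS; ring.
lra.
Qed.

Lemma wsum_pot (V : Type) (a : V -> V -> int) (phi : V -> int) q n :
  wsum a q n = \sum_(t < n) (a (q t) (q t.+1) + phi (q t) - phi (q t.+1))
               + phi (q n) - phi (q 0%N).
Proof.
elim: n => [|n IH]; first by rewrite wsum0 big_ord0 add0r subrr.
by rewrite wsumS big_ord_recr /= IH; ring.
Qed.

Lemma pigeon (V : finType) (q : nat -> V) :
  exists i j, (i < j <= #|V|)%N /\ q i = q j.
Proof.
pose g := fun i : 'I_#|V|.+1 => q i.
have : ~~ injectiveb g.
  by apply/negP => /injectiveP /leq_card; rewrite card_ord ltnn.
case/injectivePn => i [j ij gij].
have hi := ltn_ord i; have hj := ltn_ord j.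
case: (ltngtP i j) => [lt|gt|eq].
- exists i, j; split => //; rewrite lt /=; by [].
- exists j, i; split => //; rewrite gt /=; by [].
- by move: ij; rewrite (val_inj eq) eqxx.
Qed.

Lemma walk_lb (V : finType) (F : V -> V -> Prop) (a : V -> V -> int) (M : int) :
  0 <= M -> (forall u u', - M <= a u u') ->
  (forall q n, (0 < n)%N -> (n <= #|V|)%N -> q 0%N = q n -> walkP F q n ->
     0 <= wsum a q n) ->
  forall n q, walkP F q n -> - (#|V|%:Z * M) <= wsum a q n.
Proof.
move=> M0 HM Hcyc; elim/ltn_ind => n IH q Hq.
case: (leqP n #|V|) => Hn.
  apply: le_trans (@wsum_lb _ a q n M _).
    have : (n%:Z <= #|V|%:Z) by rewrite lez_nat.
    move=> h; rewrite lerN2; exact: ler_wpM2r.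
  by move=> t _; apply: HM.
have [i [j [/andP [ij jV] qij]]] := pigeon q.
set c := (j - i)%N.
have c0 : (0 < c)%N by rewrite /c subn_gt0.
have ji : j = (i + c)%N by rewrite /c subnKC // ltnW.
pose r := fun t => if (t <= i)%N then q t else q (t + c)%N.
have rE : forall t, (i <= t)%N -> r t = q (t + c)%N.
  move=> t it; rewrite /r; case: ifP => // ti.
  have -> : t = i by apply/eqP; rewrite eqn_leq ti it.
  by rewrite qij ji addnC.
have Hcq : 0 <= wsum a (fun t => q (i + t)%N) c.
  apply: Hcyc => //.
  - by rewrite /c; apply: leq_trans (leq_subr _ _) jV.
  - by rewrite addn0 -ji.
  - move=> t tc; have := Hq (i + t)%N; rewrite addnS; apply; lia.
have Hr : - (#|V|%:Z * M) <= wsum a r (n - c).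
  apply: IH; first by lia.
  move=> t tn; case: (leqP i t) => it.
    rewrite !rE //; last exact: leqW.
    rewrite addSn; apply: Hq; lia.
  rewrite /r it (ltnW it) /=; apply: Hq; lia.
have e1 : (n - c = i + (n - j))%N by lia.
rewrite e1 wsum_split in Hr.
have -> : n = (i + (c + (n - j)))%N by lia.
rewrite wsum_split wsum_split.
have E1 : wsum a r i = wsum a q i.
  by apply: wsum_ext => t ti; rewrite /r ti.
have E2 : wsum a (fun t => r (i + t)%N) (n - j) =
          wsum a (fun t => q (i + (c + t)))%N (n - j).
  by apply: wsum_ext => t _; rewrite rE ?leq_addr // addnA addnAC.
rewrite E1 E2 in Hr.
move: Hcq Hr; set X := wsum _ _ c; set Y := wsum _ _ (n - j); lra.
Qed.

Lemma fin_bound (T : finType) (f : T -> int) : exists M, 0 <= M /\ forall x, `|f x| <= M.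
Proof.
exists (\sum_x `|f x|); split; first by apply: sumr_ge0.
by move=> x; rewrite (bigD1 x) //= lerDl sumr_ge0.
Qed.

Lemma potential (V : finType) (F : V -> V -> Prop) (a : V -> V -> int) :
  (forall q n, (0 < n)%N -> (n <= #|V|)%N -> q 0%N = q n -> walkP F q n ->
     0 <= wsum a q n) ->
  exists phi : V -> int, forall u u', F u u' -> phi u' <= phi u + a u u'.
Proof.
move=> Hcyc.
have [M [M0 HM]] := fin_bound (fun x : V * V => a x.1 x.2).
have HM' : forall u u', - M <= a u u' by move=> u u'; exact: (lerNnormlW (HM (u, u'))).
have LB := walk_lb M0 HM' Hcyc.
set C := #|V|%:Z * M in LB.
have C0 : 0 <= C by rewrite /C mulr_ge0.
have Hmin : forall u, exists m : int,
    (exists q n, walkP F q n /\ q n = u /\ wsum a q n = m) /\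
    (forall q n, walkP F q n -> q n = u -> m <= wsum a q n).
  move=> u.
  suff : forall k : nat, forall q n, walkP F q n -> q n = u ->
      wsum a q n <= - C + k%:Z ->
      exists m : int,
      (exists q n, walkP F q n /\ q n = u /\ wsum a q n = m) /\
      (forall q n, walkP F q n -> q n = u -> m <= wsum a q n).
    move=> H; apply: (H `|C|%N (fun _ => u) 0%N) => //.
    by rewrite wsum0 abszE ger0_norm // addNr.
  elim => [|k IH] q n Hq Hqn Hle.
    exists (wsum a q n); split; first by exists q, n.
    move=> q' n' Hq' _; have := LB n' q' Hq'; move: Hle; rewrite addr0; lra.
  case: (classic (exists q' n', walkP F q' n' /\ q' n' = u /\ wsum a q' n' < wsum a q n)).
    move=> [q' [n' [Hq' [Hu Hlt]]]]; apply: (IH q' n') => //.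
    move: Hle Hlt; rewrite intS; lia.
  move=> Hno; exists (wsum a q n); split; first by exists q, n.
  move=> q' n' Hq' Hu; rewrite leNgt; apply/negP => Hlt; apply: Hno.
  by exists q', n'.
have [phi Hphi] := fin_all_exists Hmin.
exists phi => u u' Fuu'.
have [[q [n [Hq [Hqn Hs]]]] _] := Hphi u.
have [_ Hm] := Hphi u'.
pose q' := fun t => if (t <= n)%N then q t else u'.
have Hq' : walkP F q' n.+1.
  move=> t; rewrite ltnS /q' => tn; rewrite tn.
  case: (leqP t.+1 n) => tn'; first by apply: Hq.
  have -> : t = n by apply/eqP; rewrite eqn_leq tn.
  by rewrite Hqn.
have := Hm q' n.+1 Hq'; rewrite /q' ltnn => /(_ erefl).
rewrite wsumS leqnn (@wsum_ext _ a _ q n); last by move=> t tn; rewrite tn.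
by rewrite ltnn Hs Hqn.
Qed.

Definition G {V : Type} (p : nat -> V) (N : nat) (u u' : V) : Prop :=
  exists j, (N <= j)%N /\ p j = u /\ p j.+1 = u'.

Lemma G_mono (V : Type) (p : nat -> V) N N' u u' : (N <= N')%N -> G p N' u u' -> G p N u u'.
Proof. move=> NN [j [Nj H]]; exists j; split => //; exact: leq_trans Nj. Qed.

Lemma sum_mono (h : nat -> int) t k : (forall j, 0 <= h j) ->
  \sum_(j < t) h j <= \sum_(j < t + k) h j.
Proof.
move=> h0; elim: k => [|k IH]; first by rewrite addn0.
by rewrite addnS big_ord_recr /= (le_trans IH) // lerDl.
Qed.

Lemma pot_core (V : finType) (p : nat -> V) (a : V -> V -> int) N (phi : V -> int) :
  (forall u u', G p N u u' -> phi u' <= phi u + a u u') ->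
  exists (h : nat -> int) (K : int),
    [/\ (forall j, 0 <= h j),
        (forall j, h j = a (p (N + j)%N) (p (N + j).+1) + phi (p (N + j)%N) - phi (p (N + j).+1)),
        0 <= K &
        forall t, `|psum a p (N + t) - psum a p N - \sum_(j < t) h j| <= K].
Proof.
move=> Hphi.
pose h := fun j => a (p (N + j)%N) (p (N + j).+1) + phi (p (N + j)%N) - phi (p (N + j).+1).
have [F [F0 HF]] := fin_bound phi.
exists h, (F + F); split => //.
- move=> j; rewrite /h.
  have H : G p N (p (N + j)%N) (p (N + j).+1) by exists (N + j)%N; split => //; exact: leq_addr.
  have := Hphi _ _ H; lra.
- lra.
- move=> t; rewrite /psum -/(wsum a p (N + t)) -/(wsum a p N) wsum_split.
  rewrite (wsum_pot a phi (fun t0 => p (N + t0)%N) t) /=.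
  have -> : \sum_(t0 < t) (a (p (N + t0)%N) (p (N + t0.+1)%N) + phi (p (N + t0)%N) -
         phi (p (N + t0.+1)%N)) = \sum_(j < t) h j.
    by apply: eq_bigr => j _; rewrite /h addnS.
  rewrite addn0.
  have h1 := HF (p (N + t)%N); have h2 := HF (p N).
  move: h1 h2; set A := phi _; set B := phi _ => h1 h2.
  have -> : wsum a p N + (\sum_(j < t) h j + A - B) - wsum a p N - \sum_(j < t) h j = A - B by ring.
  apply: le_trans (ler_normB _ _) _; exact: lerD.
Qed.

Lemma pot_lower (V : finType) (p : nat -> V) (a : V -> V -> int) N (phi : V -> int) :
  (forall u u', G p N u u' -> phi u' <= phi u + a u u') ->
  exists K, forall n, (N <= n)%N -> K <= psum a p n.
Proof.
move=> Hphi; have [h [K [h0 _ K0 HK]]] := pot_core Hphi.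
exists (psum a p N - K) => n Nn.
have := HK (n - N)%N; rewrite subnKC // => /lerNnormlW.
have : 0 <= \sum_(j < n - N) h j by apply: sumr_ge0.
lra.
Qed.

Lemma pot_dich (V : finType) (p : nat -> V) (a : V -> V -> int) N (phi : V -> int) :
  (forall u u', G p N u u' -> phi u' <= phi u + a u u') ->
  (exists N1, (N <= N1)%N /\
     (forall q n, walkP (G p N1) q n -> q 0%N = q n -> wsum a q n = 0) /\
     exists K, forall n, (N1 <= n)%N -> `|psum a p n| <= K)
  \/ (forall M, exists N', forall n, (N' <= n)%N -> M <= psum a p n).
Proof.
move=> Hphi; have [h [K [h0 hE K0 HK]]] := pot_core Hphi.
case: (classic (exists N1, forall j, (N1 <= j)%N -> h j = 0)) => [[N1 HN1]|Hno].
  left; exists (N + N1)%N; split; first exact: leq_addr.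
  split.
    move=> q n Hq Hq0; rewrite (wsum_pot a phi) Hq0 addrK.
    apply: big1 => t _.
    have [j [Nj [E1 E2]]] := Hq t (ltn_ord t).
    have := HN1 (j - N)%N; rewrite hE subnKC; last exact: leq_trans (leq_addr _ _) Nj.
    by rewrite E1 E2 => ->; rewrite // leq_subRL ?(leq_trans (leq_addr _ _) Nj).
  have RN1 : forall k, \sum_(j < N1 + k) h j = \sum_(j < N1) h j.
    elim => [|k IH]; first by rewrite addn0.
    by rewrite addnS big_ord_recr /= IH HN1 ?addr0 // leq_addr.
  exists (`|psum a p N| + `|\sum_(j < N1) h j| + K) => n Nn.
  have := HK (n - N)%N; rewrite subnKC; last exact: leq_trans (leq_addr _ _) Nn.
  have -> : (n - N = N1 + (n - N - N1))%N by lia.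
  rewrite RN1; set X := psum a p n; set Y := psum a p N; set Z := \sum_(j < N1) h j.
  move=> H.
  have -> : X = (X - Y - Z) + Y + Z by ring.
  have := ler_normD (X - Y - Z + Y) Z; have := ler_normD (X - Y - Z) Y; lra.
right.
have Hinf : forall N1, exists j, (N1 <= j)%N /\ 1 <= h j.
  move=> N1; apply: NNPP => Hn; apply: Hno; exists N1 => j Nj.
  apply/eqP; rewrite eq_le h0 andbT leNgt; apply/negP => hj.
  by apply: Hn; exists j; split => //; lia.
have Hunb : forall c : nat, exists t, c%:Z <= \sum_(j < t) h j.
  elim => [|c [t Ht]]; first by exists 0%N; rewrite big_ord0.
  have [j [tj hj]] := Hinf t.
  exists j.+1; rewrite big_ord_recr /=.
  have := sum_mono t (j - t) h0; rewrite subnKC // => H.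
  rewrite intS; lra.
move=> M.
have [t0 Ht0] := Hunb (absz (M - psum a p N + K)).
exists (N + t0)%N => n Nn.
have := HK (n - N)%N; rewrite subnKC; last exact: leq_trans (leq_addr _ _) Nn.
move/lerNnormlW.
have := sum_mono t0 (n - N - t0) h0.
have -> : (t0 + (n - N - t0) = n - N)%N by lia.
move: Ht0; rewrite abszE => H1 H2 H3.
have := ler_norm (M - psum a p N + K).
lra.
Qed.

Lemma normE_ge (V : finType) (e : rel V) (r : V -> V -> int) u u' :
  e u u' -> `|r u u'| <= (normE e r)%:Z.
Proof.
move=> euu; rewrite -abszE lez_nat.
exact: (@leq_bigmax_cond _ (fun q : V * V => e q.1 q.2) (fun q => `|r q.1 q.2|%N) (u, u')).
Qed.

Lemma wsum_abs (V : finType) (e : rel V) (r : V -> V -> int) q n :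
  walkP (fun u u' => e u u') q n -> `|wsum r q n| <= n%:Z * (normE e r)%:Z.
Proof.
elim: n => [|n IH] Hq; first by rewrite wsum0 normr0 mul0r.
rewrite wsumS; apply: le_trans (ler_normD _ _) _.
have h1 := normE_ge r (Hq n (ltnSn n)).
have h2 : `|wsum r q n| <= n%:Z * (normE e r)%:Z by apply: IH => t tn; apply: Hq; apply: ltnW.
have -> : (n.+1)%:Z * (normE e r)%:Z = n%:Z * (normE e r)%:Z + (normE e r)%:Z by rewrite intS; ring.
exact: lerD.
Qed.

Lemma coordE (V : finType) d (w : V -> V -> 'I_d -> int) (k : 'I_d) u u' :
  Defs.coord w k u u' = w u u' k.
Proof. by rewrite /Defs.coord valK. Qed.

Lemma enc (V : finType) (e : rel V) d (w : V -> V -> 'I_d -> int) q n :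
  walkP (fun u u' => e u u') q n -> (n <= #|V|)%N ->
  forall m, (m < d)%N ->
  (0 <= wsum (Ew e w m) q n -> forall k, (d.-1 - m <= k <= d.-1)%N ->
     (forall l, (d.-1 - m <= l < k)%N -> wsum (Defs.coord w l) q n = 0) ->
     0 <= wsum (Defs.coord w k) q n) /\
  (wsum (Ew e w m) q n < 0 -> exists k, (d.-1 - m <= k <= d.-1)%N /\
     (forall l, (d.-1 - m <= l < k)%N -> wsum (Defs.coord w l) q n = 0) /\
     wsum (Defs.coord w k) q n < 0).
Proof.
move=> Hq hn; elim => [|m IH] md.
  rewrite subn0; split.
    move=> H k /andP [k1 k2] _.
    by have -> : k = d.-1 by apply/eqP; rewrite eqn_leq k1 k2.
  by move=> H; exists d.-1; split; [rewrite leqnn|split => // l; lia].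
have [IHp IHn] := IH (ltnW md).
set b := (d.-1 - m.+1)%N.
have bE : (d.-1 - m = b.+1)%N by rewrite /b; lia.
rewrite bE in IHp IHn.
set B := (#|V| * normE e (Ew e w m))%N.
have Hrec : wsum (Ew e w m.+1) q n = wsum (Defs.coord w b) q n * (B%:Z + 1) + wsum (Ew e w m) q n.
  by rewrite /wsum mulr_suml -big_split.
have HB : `|wsum (Ew e w m) q n| <= B%:Z.
  apply: le_trans (wsum_abs (Ew e w m) Hq) _.
  rewrite /B PoszM; apply: ler_wpM2r => //; by rewrite lez_nat.
have := lerNnormlW HB; have := ler_normlW HB.
rewrite Hrec; set x := wsum (Defs.coord w b) q n; set S := wsum (Ew e w m) q n.
move=> hS1 hS2.
have B0 : 0 <= B%:Z by [].
split.
  move=> HT k /andP [k1 k2] Hz.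
  have x0 : 0 <= x.
    rewrite leNgt; apply/negP => xn.
    have : x * (B%:Z + 1) <= - (B%:Z + 1) by nia.
    lra.
  case: (ltngtP b k) => [bk|kb|bk].
  - have xz : x = 0 by apply: Hz; rewrite leqnn bk.
    apply: IHp => //.
      move: HT; rewrite xz mul0r add0r //.
      by rewrite bk k2.
    move=> l /andP [l1 l2]; apply: Hz; rewrite l2 andbT; exact: ltnW.
  - by move: k1; rewrite leqNgt kb.
  - by rewrite -bk.
move=> HT.
case: (ltrgtP x 0) => [xn|xp|xz].
- exists b; split; first by rewrite leqnn /b leq_subr.
  by split => // l; lia.
- have : (B%:Z + 1) <= x * (B%:Z + 1) by nia.
  lra.
- have [k [k1 [Hz Hk]]] : exists k, (b.+1 <= k <= d.-1)%N /\
     (forall l, (b.+1 <= l < k)%N -> wsum (Defs.coord w l) q n = 0) /\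
     wsum (Defs.coord w k) q n < 0.
    by apply: IHn; move: HT; rewrite xz mul0r add0r.
  exists k; split; first by move: k1; case/andP => k1 k2; rewrite k2 andbT ltnW.
  split => // l /andP [l1 l2].
  case: (ltngtP l b) => [lb|bl|lb].
  + by move: l1; rewrite leqNgt lb.
  + by apply: Hz; rewrite bl l2.
  + by rewrite lb.
Qed.

Lemma wsum_coord (V : finType) d (w : V -> V -> 'I_d -> int) (k : 'I_d) q n :
  wsum (Defs.coord w k) q n = wsum (fun u u' => w u u' k) q n.
Proof. by apply: eq_bigr => t _; rewrite coordE. Qed.

Lemma lex_pos (V : finType) (e : rel V) d (w : V -> V -> 'I_d -> int) q n :
  (0 < d)%N -> walkP (fun u u' => e u u') q n -> (n <= #|V|)%N ->
  0 <= wsum (E1 e w) q n ->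
  forall k : 'I_d, (forall l : 'I_d, (l < k)%N -> wsum (fun u u' => w u u' l) q n = 0) ->
  0 <= wsum (fun u u' => w u u' k) q n.
Proof.
move=> hd Hq hn H k Hz.
have [Hp _] := enc w Hq hn (m := d.-1) (ltac:(by rewrite ltn_predL)).
rewrite -wsum_coord; apply: Hp => //.
  by rewrite subnn /= -ltnS prednK.
move=> l /andP [_ lk]; have ld : (l < d)%N by apply: ltn_trans lk _.
by have := Hz (Ordinal ld) lk; rewrite -wsum_coord.
Qed.

Lemma lex_neg (V : finType) (e : rel V) d (w : V -> V -> 'I_d -> int) q n :
  (0 < d)%N -> walkP (fun u u' => e u u') q n -> (n <= #|V|)%N ->
  wsum (E1 e w) q n < 0 ->
  exists k : 'I_d, (forall l : 'I_d, (l < k)%N -> wsum (fun u u' => w u u' l) q n = 0) /\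
  wsum (fun u u' => w u u' k) q n < 0.
Proof.
move=> hd Hq hn H.
have [_ Hn] := enc w Hq hn (m := d.-1) (ltac:(by rewrite ltn_predL)).
have [k [/andP [_ kd] [Hz Hk]]] := Hn H.
have kd' : (k < d)%N by rewrite -(prednK hd) ltnS.
exists (Ordinal kd'); split; last by rewrite -wsum_coord.
move=> l lk; rewrite -wsum_coord; apply: Hz; by rewrite subnn.
Qed.

Lemma walk_G0 (V : Type) (p : nat -> V) N q n :
  walkP (G p N) q n -> walkP (G p 0) q n.
Proof. by move=> H t tn; apply: (G_mono (N' := N)) => //; apply: H. Qed.

Lemma walk_e (V : Type) (e : rel V) (p : nat -> V) q n :
  (forall j, e (p j) (p j.+1)) -> walkP (G p 0) q n -> walkP (fun u u' => e u u') q n.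
Proof. by move=> he H t tn; have [j [_ [<- <-]]] := H t tn. Qed.

Definition Zlev (V : finType) d (w : V -> V -> 'I_d -> int) (p : nat -> V) (l N : nat) :=
  forall q n, (0 < n)%N -> (n <= #|V|)%N -> q 0%N = q n -> walkP (G p N) q n ->
  forall l' : 'I_d, (l' < l)%N -> wsum (fun u u' => w u u' l') q n = 0.

Lemma part1_core (V : finType) (e : rel V) d (w : V -> V -> 'I_d -> int) (p : nat -> V) :
  (0 < d)%N -> (forall j, e (p j) (p j.+1)) ->
  (forall q n, (0 < n)%N -> (n <= #|V|)%N -> q 0%N = q n -> walkP (G p 0) q n ->
     0 <= wsum (E1 e w) q n) ->
  ~ lex_p2_wins w p.
Proof.
move=> hd hplay hcyc [k [Hk Hlow]].
have Hnn : forall (L : 'I_d) N, Zlev w p L N ->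
    forall q n, (0 < n)%N -> (n <= #|V|)%N -> q 0%N = q n -> walkP (G p N) q n ->
    0 <= wsum (fun u u' => w u u' L) q n.
  move=> L N HZ q n n0 nV q0 Hq.
  have Hq0 := walk_G0 Hq.
  apply: (@lex_pos V e d w q n hd (walk_e hplay Hq0) nV (hcyc q n n0 nV q0 Hq0)).
  by move=> l lL; apply: (HZ q n).
have claim : forall l, (l <= k)%N -> exists N, Zlev w p l N.
  elim => [|l IH] lk; first by exists 0%N => q n _ _ _ _ l'.
  have [N HN] := IH (ltnW lk).
  have ld : (l < d)%N by exact: leq_trans lk (ltnW (ltn_ord k)).
  pose L := Ordinal ld.
  have [phi Hphi] := potential (Hnn L N HN).
  case: (pot_dich Hphi) => [[N1 [NN1 [Hz _]]] | Hinf].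
    exists N1 => q n n0 nV q0 Hq l'; rewrite ltnS leq_eqVlt => /orP [/eqP el | ll].
      have -> : l' = L by apply: val_inj.
      by apply: Hz.
    apply: (HN q n) => //.
    by move=> t tn; apply: (G_mono NN1); apply: Hq.
  have [B HB] := Hlow L lk.
  have [N' HN'] := Hinf (B + 1).
  have [n Nn Hn] := HB N'.
  have := HN' n Nn; lra.
have [N HN] := claim k (leqnn k).
have [phi Hphi] := potential (Hnn k N HN).
have [K HK] := pot_lower Hphi.
have [N' HN'] := Hk (K - 1).
have := HK (N + N')%N (leq_addr _ _); have := HN' (N + N')%N (leq_addl _ _).
lra.
Qed.

Lemma wsumN (V : Type) (a : V -> V -> int) q n :
  wsum (fun u u' => - a u u') q n = - wsum a q n.
Proof. by rewrite /wsum sumrN. Qed.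

Lemma psumN (V : finType) (a : V -> V -> int) p n :
  psum (fun u u' => - a u u') p n = - psum a p n.
Proof. by rewrite /psum sumrN. Qed.

Lemma part2_core (V : finType) (e : rel V) d (w : V -> V -> 'I_d -> int) (p : nat -> V) :
  (0 < d)%N -> (forall j, e (p j) (p j.+1)) ->
  (forall q n, (0 < n)%N -> (n <= #|V|)%N -> q 0%N = q n -> walkP (G p 0) q n ->
     wsum (E1 e w) q n < 0) ->
  lex_p2_wins w p.
Proof.
move=> hd hplay hcyc.
have claim : forall l, (l <= d)%N ->
   (exists N, Zlev w p l N /\ forall l' : 'I_d, (l' < l)%N ->
      exists B : int, forall N0, exists2 n, (N0 <= n)%N & psum (fun u u' => w u u' l') p n <= B)
   \/ lex_p2_wins w p.
  elim => [|l IH] ld.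
    by left; exists 0%N; split => [q n _ _ _ _ l'|l'].
  case: (IH (ltnW ld)) => [[N [HN Hb]]|]; last by right.
  pose L := Ordinal ld.
  have Hnp : forall q n, (0 < n)%N -> (n <= #|V|)%N -> q 0%N = q n -> walkP (G p N) q n ->
      0 <= wsum (fun u u' => - w u u' L) q n.
    move=> q n n0 nV q0 Hq; have Hq0 := walk_G0 Hq.
    have [k0 [Hz Hk0]] := @lex_neg V e d w q n hd (walk_e hplay Hq0) nV (hcyc q n n0 nV q0 Hq0).
    rewrite wsumN oppr_ge0.
    case: (ltngtP k0 l) => [kl|lk|kl].
    - by move: Hk0; rewrite (HN q n) // ltxx.
    - by rewrite Hz.
    - have -> : L = k0 by apply: val_inj.
      exact: ltW.
  have [phi Hphi] := potential Hnp.
  case: (pot_dich Hphi) => [[N1 [NN1 [Hz [K HK]]]] | Hinf].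
    left; exists N1; split.
      move=> q n n0 nV q0 Hq l'; rewrite ltnS leq_eqVlt => /orP [/eqP el | ll].
        have -> : l' = L by apply: val_inj.
        by apply/eqP; rewrite -oppr_eq0 -wsumN; apply/eqP; apply: Hz.
      apply: (HN q n) => //.
      by move=> t tn; apply: (G_mono NN1); apply: Hq.
    move=> l'; rewrite ltnS leq_eqVlt => /orP [/eqP el | ll]; last exact: Hb.
    have -> : l' = L by apply: val_inj.
    exists K => N0; exists (N0 + N1)%N; first exact: leq_addr.
    have := HK (N0 + N1)%N (leq_addl _ _); rewrite psumN normrN.
    exact: ler_normlW.
  right; exists L; split.
    move=> M; have [N' HN'] := Hinf (- M); exists N' => n Nn.
    by have := HN' n Nn; rewrite psumN lerN2.
  by move=> l' ll; apply: Hb.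
case: (claim d (leqnn d)) => // [[N [HN _]]].
have [i [j [/andP [ij jV] pij]]] := pigeon (fun i => p (N + i)%N).
pose Q := fun t => p (N + i + t)%N.
have HQ : walkP (G p N) Q (j - i).
  by move=> t tn; exists (N + i + t)%N; split; [rewrite -addnA leq_addr|rewrite /Q addnS].
have Q0 : Q 0%N = Q (j - i)%N by rewrite /Q addn0 /= pij -addnA subnKC // ltnW.
have n0 : (0 < j - i)%N by rewrite subn_gt0.
have nV : (j - i <= #|V|)%N by apply: leq_trans (leq_subr _ _) jV.
have Hq0 := walk_G0 HQ.
have [k0 [_ Hk0]] := @lex_neg V e d w Q _ hd (walk_e hplay Hq0) nV (hcyc Q _ n0 nV Q0 Hq0).
by move: Hk0; rewrite (HN Q (j - i)%N) // ltxx.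
Qed.

Lemma psumE (V : finType) (a : V -> V -> int) p n : psum a p n = wsum a p n.
Proof. by []. Qed.

Lemma loop_play (V : finType) (owner : V -> bool) (e : rel V) (pl : bool)
  (s : strategy V) (f : V -> V) (hs : forall h x, s h x = f x) v p
  (hp : consistent owner e pl s v p) q n :
  (0 < n)%N -> q 0%N = q n -> walkP (G p 0) q n ->
  exists r i, consistent owner e pl s v r /\
    forall (a : V -> V -> int) m, psum a r (i + m * n) = psum a p i + m%:Z * wsum a q n.
Proof.
move=> n0 q0 Hq; case: hp => p0 pplay pcons.
have Gedge : forall u u', G p 0 u u' -> e u u' /\ (owner u = pl -> u' = f u).
  move=> u u' [j [_ [<- <-]]]; split; first exact: pplay.
  by move=> o; rewrite pcons // hs.
have [i [_ [pi _]]] := Hq 0%N n0.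
pose r := fun t => if (t <= i)%N then p t else q ((t - i) %% n)%N.
have rE : forall t, (i <= t)%N -> r t = q ((t - i) %% n)%N.
  move=> t it; rewrite /r; case: ifP => // ti.
  have -> : t = i by apply/eqP; rewrite eqn_leq ti it.
  by rewrite subnn mod0n pi.
have qS : forall y, q (y.+1 %% n)%N = q ((y %% n).+1).
  move=> y; rewrite -addn1 -modnDml addn1.
  have := ltn_pmod y n0; rewrite leq_eqVlt => /orP [/eqP e1|lt].
    by rewrite e1 modnn.
  by rewrite modn_small.
have redge : forall t, G p 0 (r t) (r t.+1).
  move=> t; case: (ltnP t i) => ti.
    exists t; split => //; rewrite /r (ltnW ti) ti; by [].
  rewrite rE // rE ?(leqW ti) // subSn // qS.
  by apply: Hq; apply: ltn_pmod.
exists r, i; split.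
  split.
  - by rewrite /r leq0n.
  - by move=> t; have [] := Gedge _ _ (redge t).
  - by move=> t o; rewrite hs; have [_ ->] := Gedge _ _ (redge t).
move=> a; elim => [|m IH].
  rewrite mul0n addn0 mul0r addr0 !psumE; apply: wsum_ext => t ti.
  by rewrite /r ti.
have -> : (i + m.+1 * n = (i + m * n) + n)%N by rewrite mulSn; lia.
rewrite !psumE wsum_split -psumE IH.
rewrite (@wsum_ext _ a _ q n); first by rewrite intS; ring.
move=> t tn; rewrite rE; last by rewrite -addnA leq_addr.
rewrite -addnA addKn modnMDl.
move: tn; rewrite leq_eqVlt => /orP [/eqP ->|lt]; first by rewrite modnn.
by rewrite modn_small.
Qed.

Lemma natrZ (n : nat) : ((n%:Z)%:~R : rat) = n%:R.
Proof. by rewrite -pmulrn. Qed.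

Lemma avg_lb_int (V : finType) (a : V -> V -> int) (r : nat -> V) T (u v : int) :
  0 < v -> (u%:~R / v%:~R : rat) <= avg a r T -> u * T.+1%:Z <= v * psum a r T.+1.
Proof.
move=> v0; rewrite /avg -natrZ ler_pdivrMr ?ltr0z // mulrAC ler_pdivlMr ?ltr0z //.
by rewrite -!intrM ler_int mulrC [v * _]mulrC.
Qed.

Lemma avg_ub_int (V : finType) (a : V -> V -> int) (r : nat -> V) T (u v : int) :
  0 < v -> avg a r T <= (u%:~R / v%:~R : rat) -> v * psum a r T.+1 <= u * T.+1%:Z.
Proof.
move=> v0; rewrite /avg -natrZ ler_pdivlMr ?ltr0z // mulrAC ler_pdivrMr ?ltr0z //.
by rewrite -!intrM ler_int mulrC [u * _]mulrC.
Qed.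

Lemma avg_contra1 (V : finType) (a : V -> V -> int) (r : nat -> V) i n (P C : int) :
  (0 < n)%N -> C < 0 -> (forall m, psum a r (i + m * n) = P + m%:Z * C) ->
  (forall eps : rat, 0 < eps -> liminf_ge a r (- eps)) -> False.
Proof.
move=> n0 C0 Hs Hl.
pose eps : rat := ((4 * n)%:R)^-1.
have epos : 0 < eps by rewrite /eps invr_gt0 ltr0n muln_gt0.
have [N HN] := Hl eps epos eps epos.
pose m := (N + 2 * n * absz P + i + 1)%N.
have mn : (m <= m * n)%N by rewrite leq_pmulr.
have TS : (i + m * n).-1.+1 = (i + m * n)%N.
  by rewrite prednK // addn_gt0 muln_gt0 n0 /m addn1 orbT.
have NT : (N <= (i + m * n).-1)%N by rewrite -ltnS TS /m; lia.
have := HN _ NT.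
have E : - eps - eps = ((-1)%:~R / (2 * n%:Z)%:~R : rat).
  rewrite /eps intrM natrZ natrM; field.
  by rewrite pnatr_eq0 -lt0n.
rewrite E => /avg_lb_int H.
have {H} := H (ltac:(rewrite pmulr_rgt0 // ltz_nat)).
rewrite TS Hs => H.
have hmC : P + m%:Z * C <= (absz P)%:Z - m%:Z.
  have hP : P <= (absz P)%:Z by rewrite abszE ler_norm.
  have : m%:Z * C <= m%:Z * (-1) by rewrite ler_wpM2l // -ltzD1.
  rewrite mulrN1 => h; exact: lerD.
have H2 : (2 * n)%:Z * (P + m%:Z * C) <= (2 * n * absz P)%N%:Z - (2 * (m * n))%N%:Z.
  apply: le_trans (ler_wpM2l _ hmC) _ => //.
  by rewrite mulrBr -!PoszM (mulnC m n) mulnA.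
move: H H2 mn; rewrite PoszD.
move: ((2 * n)%:Z * (P + m%:Z * C)) => W.
rewrite /m; move: (m * n)%N => Y; move: (2 * n * absz P)%N => A.
lia.
Qed.

Lemma avg_contra2 (V : finType) (a : V -> V -> int) (r : nat -> V) i n (P C : int) (c : rat) :
  (0 < n)%N -> 0 <= C -> c < 0 -> (forall m, psum a r (i + m * n) = P + m%:Z * C) ->
  limsup_le a r c -> False.
Proof.
move=> n0 C0 c0 Hs Hl.
have epos : 0 < - c / 2 by rewrite divr_gt0 // oppr_gt0.
have [N HN] := Hl _ epos.
set D := denq c.
have D0 : 0 < D by apply: denq_gt0.
have DE : D = (absz D)%:Z by rewrite abszE gtr0_norm.
pose m := (N + 2 * absz D * absz P + 1)%N.
have mn : (m <= m * n)%N by rewrite leq_pmulr.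
have TS : (i + m * n).-1.+1 = (i + m * n)%N.
  by rewrite prednK // addn_gt0 muln_gt0 n0 /m addn1 orbT.
have NT : (N <= (i + m * n).-1)%N by rewrite -ltnS TS /m; lia.
have := HN _ NT.
have E : c + - c / 2 = ((numq c)%:~R / (2 * D)%:~R : rat).
  rewrite intrM -[c in LHS]divq_num_den -/D.
  have : (D%:~R : rat) != 0 by rewrite intr_eq0 gt_eqF.
  move=> h; field; rewrite h /=; done.
rewrite E => /avg_ub_int H.
have {H} := H (ltac:(by rewrite pmulr_rgt0)).
rewrite TS Hs => H.
have h1 : (2 * D) * (- (absz P)%:Z) <= (2 * D) * (P + m%:Z * C).
  apply: ler_wpM2l; first by rewrite mulr_ge0 // ltW.
  have hP : - (absz P)%:Z <= P by rewrite abszE lerNnormlW.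
  have : 0 <= m%:Z * C by rewrite mulr_ge0.
  move=> h; rewrite -[X in X <= _]addr0; exact: lerD.
have nq0 : numq c < 0 by rewrite numq_lt0.
have nq : numq c <= -1 by move: nq0; move: (numq c) => z; clear; lia.
have h2 : numq c * (i + m * n)%N%:Z <= (-1) * (i + m * n)%N%:Z.
  by apply: ler_wpM2r.
have E2 : (2 * D) * (- (absz P)%:Z) = - (2 * absz D * absz P)%N%:Z.
  by rewrite {1}DE !PoszM mulrN.
rewrite E2 in h1.
move: (le_trans h1 H) h2 mn; rewrite PoszD.
move: (numq c * _) => W; rewrite /m; move: (m * n)%N => Y.
move: (2 * absz D * absz P)%N => A.
lia.
Qed.

Unset Implicit Arguments. Set Strict Implicit.
Theorem mainTheorem3 (V : finType) (owner : V -> bool) (e : rel V)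
  (d : nat) (w : V -> V -> 'I_d -> int)
  (hd : (0 < d)%N)
  (halt : forall u u', e u u' -> owner u != owner u')
  (hout : forall u, exists u', e u u')
  (hnz : exists u u' (i : 'I_d), e u u' /\ w u u' i != 0)
  (v : V) :
  (mp_value_ge0 owner e (E1 e w) v ->
     forall s, valid_strategy owner e true s -> positional s ->
       optimal_max owner e (E1 e w) s ->
       forall p, consistent owner e true s v p -> ~ lex_p2_wins w p) /\
  (mp_value_lt0 owner e (E1 e w) v ->
     forall s, valid_strategy owner e false s -> positional s ->
       optimal_min owner e (E1 e w) s ->
       forall p, consistent owner e false s v p -> lex_p2_wins w p).
Proof.
split.
- move=> Hval s Hvs [f Hf] Hopt p Hp.
  have hplay : forall j, e (p j) (p j.+1) by case: Hp.
  apply: (part1_core hd hplay) => q n n0 nV q0 Hq.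
  rewrite leNgt; apply/negP => Hneg.
  have [r [i [Hr Hsum]]] := loop_play Hf Hp n0 q0 Hq.
  apply: (@avg_contra1 V (E1 e w) r i n (psum (E1 e w) p i) (wsum (E1 e w) q n) n0 Hneg (Hsum _)).
  move=> eps epos.
  have [s' [Hv' Hg']] := Hval eps epos.
  exact: (Hopt s' Hv' v (- eps) Hg' r Hr).
- move=> [c [c0 [s' [Hv' Hg']]]] s Hvs [f Hf] Hopt p Hp.
  have hplay : forall j, e (p j) (p j.+1) by case: Hp.
  apply: (part2_core hd hplay) => q n n0 nV q0 Hq.
  rewrite ltNge; apply/negP => Hpos.
  have [r [i [Hr Hsum]]] := loop_play Hf Hp n0 q0 Hq.
  apply: (avg_contra2 n0 Hpos c0 (Hsum (E1 e w))).
  exact: (Hopt s' Hv' v c Hg' r Hr).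
Qed.
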